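(* Let $(P,H,\phi)$ be a host-parasite triple and let $\Psi=\{\psi_1,\dots,\psi_l\}\subseteq\mathcal R(P,H,\phi)$ with $l\ge1$. Then $\psi^{\Psi}_{med}$ is a geometric median for $\Psi$ in $\mathcal R(P,H,\phi)$ endowed with the metric $d_{edit}$ $(=d_{path})$; that is, for every $\psi\in\mathcal R(P,H,\phi)$, $$\sum_{i=1}^l d_{edit}(\psi^{\Psi}_{med},\psi_i)\le\sum_{i=1}^l d_{edit}(\psi,\psi_i).$$
   Context: A phylogenetic tree $T$ is a finite rooted tree with root $\rho_T$ (indegree $0$, outdegree $2$), in which every vertex other than the root and the leaves has indegree $1$ and outdegree $2$; $V(T)$ is its vertex set, $L(T)$ its leaf set, $V^o(T)=V(T)-L(T)$. For $v\in V^o(T)$, $Ch(v)$ is the set of children of $v$; for $v\ne\rho_T$, $par(v)$ is its parent. $x\succeq_T y$ means $x$ lies on the path from $\rho_T$ to $y$; $x\succ_T y$ means $x\succeq_T y$ and $x\ne y$. For $L\subseteq L(T)$ with $|L|\ge 2$, $lca_T(L)$ is the lowest vertex above every element of $L$; if $L=\{x\}$ then $lca_T(L)=x$. $d_T(v,w)$ is the number of edges on the (undirected) path in $T$ between $v$ and $w$. A host-parasite triple $(P,H,\phi)$ consists of two phylogenetic trees $P,H$ and a map $\phi:L(P)\to L(H)$. A reconciliation map is a map $\psi:V(P)\to V(H)$ such that (i) $\psi$ restricted to $L(P)$ equals $\phi$, and (ii) for every $v\in V^o(P)$ and every child $v'$ of $v$, $\psi(v)\succeq_H\psi(v')$; $\mathcal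 R(P,H,\phi)$ is the set of all of them. For $v\in V(P)$ let $m(v)=lca_H(\{\phi(x): x\in L(P),\ v\succeq_P x\})$ and $A(v)=\{w\in V(H): \rho_H\succeq_H w\succeq_H m(v)\}$. Up operation: given $\psi\in\mathcal R(P,H,\phi)$ and $w\in V(P)$ with $\psi(w)\notin\{\rho_H,\psi(par(w))\}$ (second condition vacuous if $w=\rho_P$), $\psi^{up}_w$ agrees with $\psi$ except $\psi^{up}_w(w)=par(\psi(w))$. Down operation: given $\psi\in\mathcal R(P,H,\phi)$ and $w\in V^o(P)$ with $\psi(w)\succ_H m(w)$ and $\psi(w)\ne\psi(v')$ for all $v'\in Ch(w)$, $\psi^{down}_w$ agrees with $\psi$ except that $\psi^{down}_w(w)$ is the unique vertex of $A(w)\cap Ch(\psi(w))$. $d_{edit}(\psi,\psi')$ is the smallest number of up/down operations transforming $\psi$ into $\psi'$; it equals $d_{path}(\psi,\psi')=\sum_{v\in V(P)}d_H(\psi(v),\psi'(v))$. For a finite multiset $A$ of reals, $med(A)$ is its median (average of the two middle elements for even cardinality); for real $r$, $[r]$ is the nearest integer, the larger one in case of a tie; for integers $n_1,\dots,n_l$, $zmed(n_1,\dots,n_l)=[med(\{n_1,\dots,n_l\})]$. The map $\psi^{\Psi}_{med}:V(P)\to V(H)$ is defined by letting $\psi^{\Psi}_{med}(v)$, for $v\in V(P)$, be the element $w\in A(v)$ with $d_H(m(v),w)=zmed(n_1,\dots,n_l)$, where $n_i=d_H(m(v),\psi_i(v))$. *)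

(* Defs.v *)
From HB Require Import structures.
From mathcomp Require Import all_boot all_order all_algebra.
Set Implicit Arguments. Unset Strict Implicit. Unset Printing Implicit Defensive.
Import Order.TTheory GRing.Theory Num.Theory.

(* A rooted tree on a finite vertex type T is given by its root [rt] and a
   parent map [par] ([par v = None] iff v is the root). *)
Section Tree.
Variables (T : finType) (rt : T) (par : T -> option T).

Fixpoint iterp (n : nat) (y : T) : option T :=
  if n is n'.+1 then obind par (iterp n' y) else Some y.

(* anc x y  <=>  x ⪰_T y  (x lies on the path from the root to y);
   in a tree every ancestor chain has fewer than #|T| steps. *)
Definition anc (x y : T) : bool := [exists n : 'I_#|T|, iterp n y == Some x].

Definition children (v : T) : {set T} := [set w | par w == Some v].
Definition is_leaf (v : T) : bool := children v == set0.

Definition is_phylo : Prop :=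
  [/\ par rt = None,
      forall v, v != rt -> par v != None,
      forall v, anc rt v,
      #|children rt| = 2 &
      forall v, #|children v| = 0 \/ #|children v| = 2].

Definition adj (u w : T) : bool := (par u == Some w) || (par w == Some u).
Fixpoint reach (n : nat) (u w : T) : bool :=
  if n is n'.+1 then [exists x, adj u x && reach n' x w] else u == w.
Definition dist (u w : T) : nat := find (fun n => reach n u w) (iota 0 #|T|).
Definition depth (v : T) : nat := dist rt v.

Definition lca (L : {set T}) : T :=
  [arg max_(w > rt | [forall x in L, anc w x]) depth w].

Definition leaves_below (v : T) : {set T} := [set x | is_leaf x && anc v x].
End Tree.

Local Open Scope ring_scope.
Definition med (s : seq nat) : rat :=
  let t := sort leq s in
  let k := size t in
  if odd k then (nth 0%N t k./2)%:R
  else ((nth 0%N t k./2.-1)%:R + (nth 0%N t k./2)%:R) / 2%:R.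
(* [r] : nearest integer, the larger one in case of a tie *)
Definition round_nearest (r : rat) : int := Num.floor (r + 2%:R^-1).
Definition zmed (s : seq nat) : nat := `|round_nearest (med s)|%N.
Local Close Scope ring_scope.

Section Recon.
Variables (TP : finType) (rP : TP) (parP : TP -> option TP)
          (TH : finType) (rH : TH) (parH : TH -> option TH)
          (phi : TP -> TH).

Definition is_recon (psi : TP -> TH) : Prop :=
  (forall x, is_leaf parP x -> psi x = phi x) /\
  (forall v v', parP v' = Some v -> anc parH (psi v) (psi v')).

Definition mlca (v : TP) : TH := lca rH parH (phi @: leaves_below parP v).

Definition dpath (psi psi' : TP -> TH) : nat :=
  \sum_(v : TP) dist parH (psi v) (psi' v).

Definition psi_med (l : nat) (psis : 'I_l -> TP -> TH) (v : TP) : TH :=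
  odflt rH [pick w | anc parH w (mlca v) &&
    (dist parH (mlca v) w == zmed [seq dist parH (mlca v) (psis i v) | i <- enum 'I_l])].
End Recon.

(* Main.v *)
Require Import Defs.
From HB Require Import structures.
From mathcomp Require Import all_boot all_order all_algebra.
From mathcomp Require Import lra zify.
Import Order.TTheory GRing.Theory Num.Theory.

Lemma round_ge0 (r : rat) : (0 <= r)%R -> (0 <= round_nearest r)%R.
Proof. move=> r0; rewrite /round_nearest floor_ge_int. by rewrite mulr0z; lra. Qed.

Lemma Z_le (r : rat) (B : nat) : (0 <= r)%R -> (r + 2%:R^-1 < (B.+1)%:R)%R ->
  (`|round_nearest r|%N <= B)%N.
Proof.
move=> r0 h. have f0 := round_ge0 r r0.
have : (round_nearest r < (B.+1)%:Z)%R by rewrite /round_nearest floor_lt_int.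
move: f0; case: (round_nearest r) => // n _; rewrite ?ltz_nat /=; lia.
Qed.

Lemma Z_ge (r : rat) (a : nat) : (0 <= r)%R -> ((a%:R) <= r + 2%:R^-1)%R ->
  (a <= `|round_nearest r|%N)%N.
Proof.
move=> r0 h. have f0 := round_ge0 r r0.
have : ((a%:Z) <= round_nearest r)%R by rewrite /round_nearest floor_ge_int.
move: f0; case: (round_nearest r) => // n _; rewrite ?lez_nat /=; lia.
Qed.

Lemma Z_spec (r : rat) : (0 <= r)%R ->
  let z := `|round_nearest r|%N in
  ((z%:R <= r + 2%:R^-1) /\ (r + 2%:R^-1 < (z.+1)%:R))%R.
Proof.
move=> r0 /=. have f0 := round_ge0 r r0.
have := floor_itv (r + 2%:R^-1). rewrite -/(round_nearest r).
move: f0; case: (round_nearest r) => // n _ /andP [h1 h2]. split => //.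
have e : (Posz n + 1)%R = Posz n.+1 by rewrite -addn1 PoszD.
by move: h2; rewrite e.
Qed.

Lemma natR_lt1 (a b : nat) : ((a%:R : rat) < b%:R + 1)%R -> (a <= b)%N.
Proof. by rewrite natr1 ltr_nat ltnS. Qed.

Lemma count_perm_sort (s : seq nat) (p : pred nat) :
  count p (sort leq s) = count p s.
Proof. have h : perm_eq (sort leq s) s by rewrite perm_sort. exact: (permP h). Qed.

Lemma os_lt (s : seq nat) j : (j < size s)%N ->
  (count (fun y => y < nth 0 (sort leq s) j) s <= j)%N.
Proof.
move=> hj. rewrite -count_perm_sort. set t := sort leq s.
have st : sorted leq t by apply: sort_sorted; exact: leq_total.
have szt : size t = size s by rewrite size_sort.
rewrite -[X in count _ X](cat_take_drop j t) count_cat.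
have -> : count (fun y => y < nth 0 t j) (drop j t) = 0.
  apply/eqP; rewrite -leqn0 leqNgt -has_count; apply/hasPn => y /(nthP 0) [i hi <-].
  rewrite nth_drop -leqNgt. rewrite size_drop in hi.
  have hi' : (i < @size nat t - j)%N := hi.
  apply: (sorted_leq_nth leq_trans leqnn 0 st); rewrite ?inE; lia.
have := count_size (fun y => y < nth 0 t j) (take j t). rewrite size_take. case: ifP; lia.
Qed.

Lemma os_le (s : seq nat) j : (j < size s)%N ->
  (j < count (fun y => y <= nth 0 (sort leq s) j) s)%N.
Proof.
move=> hj. rewrite -count_perm_sort. set t := sort leq s.
have st : sorted leq t by apply: sort_sorted; exact: leq_total.
have szt : size t = size s by rewrite size_sort.
rewrite -[X in count _ X](cat_take_drop j.+1 t) count_cat.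
have : all (fun y => y <= nth 0 t j) (take j.+1 t).
  apply/allP => y /(nthP 0) [i hi <-]. rewrite size_take in hi.
  have {}hi : (i < if j.+1 < @size nat t then j.+1 else @size nat t)%N := hi.
  rewrite nth_take; last by move: hi; case: ifP; lia.
  apply: (sorted_leq_nth leq_trans leqnn 0 st); rewrite ?inE; move: hi; case: ifP; lia.
rewrite all_count => /eqP ->. rewrite size_take. case: ifP; lia.
Qed.

Lemma os_mono (I : Type) (e : seq I) (f g : I -> nat) d :
  (forall i, g i <= f i + d)%N -> forall j,
  (nth 0 (sort leq (map g e)) j <= nth 0 (sort leq (map f e)) j + d)%N.
Proof.
move=> H j. case: (ltnP j (size e)) => hj; last first.
  by rewrite !nth_default ?size_sort ?size_map.
set a := nth 0 (sort leq (map f e)) j. set b := nth 0 (sort leq (map g e)) j.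
rewrite leqNgt; apply/negP => hb.
have h1 : (j < count (fun y => y <= a) (map f e))%N by apply: os_le; rewrite size_map.
have h2 : (count (fun y => y <= a) (map f e) <= count (fun y => y <= a + d) (map g e))%N.
  rewrite !count_map; apply: sub_count => i /=; have := H i; lia.
have h3 : (count (fun y => y <= a + d) (map g e) <= count (fun y => y < b) (map g e))%N.
  by apply: sub_count => y /=; lia.
have h4 : (count (fun y => y < b) (map g e) <= j)%N by apply: os_lt; rewrite size_map.
lia.
Qed.

Lemma med_ge0 (s : seq nat) : (0 <= med s)%R.
Proof.
rewrite /med; case: ifP => _; first by rewrite ler0n.
have h1 := ler0n rat (nth 0 (sort leq s) (size (sort leq s))./2.-1).
have h2 := ler0n rat (nth 0 (sort leq s) (size (sort leq s))./2).
lra.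
Qed.

Lemma med_mono (I : Type) (e : seq I) (f g : I -> nat) d :
  (forall i, g i <= f i + d)%N -> (med (map g e) <= med (map f e) + d%:R)%R.
Proof.
move=> H. have O := @os_mono _ e f g d H. rewrite /med !size_sort !size_map.
set k := size e.
have hA := O k./2. have hB := O k./2.-1.
have rA : ((nth 0 (sort leq (map g e)) k./2)%:R <= (nth 0 (sort leq (map f e)) k./2)%:R + d%:R :> rat)%R
  by rewrite -natrD ler_nat.
have rB : ((nth 0 (sort leq (map g e)) k./2.-1)%:R <= (nth 0 (sort leq (map f e)) k./2.-1)%:R + d%:R :> rat)%R
  by rewrite -natrD ler_nat.
case: ifP => _; first by [].
lra.
Qed.

Lemma nth_sort_le (s : seq nat) B j : (forall x, x \in s -> x <= B)%N ->
  (nth 0 (sort leq s) j <= B)%N.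
Proof.
move=> H. case: (ltnP j (size (sort leq s))) => hj; last by rewrite nth_default.
by apply: H; rewrite -(mem_sort leq); apply: mem_nth.
Qed.

Lemma med_le (s : seq nat) B : (forall x, x \in s -> x <= B)%N -> (med s <= B%:R)%R.
Proof.
move=> H. rewrite /med.
have hA : ((nth 0 (sort leq s) (size (sort leq s))./2)%:R <= B%:R :> rat)%R
  by rewrite ler_nat; apply: nth_sort_le.
have hB : ((nth 0 (sort leq s) (size (sort leq s))./2.-1)%:R <= B%:R :> rat)%R
  by rewrite ler_nat; apply: nth_sort_le.
case: ifP => _; first by []. lra.
Qed.

Lemma zmed_le (s : seq nat) B : (forall x, x \in s -> x <= B)%N -> (zmed s <= B)%N.
Proof.
move=> H. apply: Z_le; first exact: med_ge0.
have := med_le s B H. have e : ((B.+1)%:R : rat)%R = (B%:R + 1)%R by rewrite natr1.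
rewrite e. lra.
Qed.

Lemma zmed_mono (I : Type) (e : seq I) (f g : I -> nat) d :
  (forall i, g i <= f i + d)%N -> (zmed (map g e) <= zmed (map f e) + d)%N.
Proof.
move=> H. apply: Z_le; first exact: med_ge0.
have := @med_mono _ e f g d H. have [_ h2] := Z_spec _ (med_ge0 (map f e)).
move: h2. rewrite -/(zmed (map f e)). set z := zmed (map f e).
have e1 : (((z + d).+1)%:R : rat)%R = (z%:R + d%:R + 1)%R by rewrite -natrD natr1.
have e2 : ((z.+1)%:R : rat)%R = (z%:R + 1)%R by rewrite natr1.
rewrite e1 e2. lra.
Qed.

Lemma zmed_char (s : seq nat) :
  (2 * count (fun y => y < zmed s) s <= size s <= 2 * count (fun y => y <= zmed s) s)%N.
Proof.
have [h1 h2] := Z_spec _ (med_ge0 s). rewrite -/(zmed s) in h1 h2.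
move: h1 h2. set z := zmed s. rewrite /med. set t := sort leq s.
have st : sorted leq t by apply: sort_sorted; exact: leq_total.
have szt : size t = size s by rewrite size_sort.
rewrite szt. set k := size s.
have hk := odd_double_half k.
have ez : ((z.+1)%:R : rat)%R = (z%:R + 1)%R by rewrite natr1.
rewrite ez.
case: ifP => ho h1 h2.
- have hm : (k./2 < k)%N by rewrite ho /= in hk; lia.
  have e1 : (z <= nth 0 t k./2)%N by apply: natR_lt1; lra.
  have e2 : (nth 0 t k./2 <= z)%N by apply: natR_lt1; lra.
  have c1 := os_lt s _ hm. have c2 := os_le s _ hm. rewrite -/t in c1 c2.
  have d1 : (count (fun y => y < z) s <= count (fun y => y < nth 0 t k./2) s)%N
    by apply: sub_count => y /=; lia.
  have d2 : (count (fun y => y <= nth 0 t k./2) s <= count (fun y => y <= z) s)%N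
    by apply: sub_count => y /=; lia.
  rewrite ho /= in hk. lia.
- rewrite ho /= in hk.
  case: (posnP k./2) => hm0.
    have hk0 : k = 0%N by lia.
    have := count_size (fun y => y < z) s. rewrite -/k. lia.
  have hm : (k./2 < k)%N by lia.
  have hm' : (k./2.-1 < k)%N by lia.
  have ab : (nth 0 t k./2.-1 <= nth 0 t k./2)%N.
    apply: (sorted_leq_nth leq_trans leqnn 0 st); rewrite ?inE ?szt -/k; lia.
  have abR : ((nth 0 t k./2.-1)%:R <= (nth 0 t k./2)%:R :> rat)%R by rewrite ler_nat.
  have e1 : (nth 0 t k./2.-1 <= z)%N by apply: natR_lt1; lra.
  have e2 : (z <= nth 0 t k./2)%N by apply: natR_lt1; lra.
  have c1 := os_lt s _ hm. have c2 := os_le s _ hm'. rewrite -/t in c1 c2.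
  have d1 : (count (fun y => y < z) s <= count (fun y => y < nth 0 t k./2) s)%N
    by apply: sub_count => y /=; lia.
  have d2 : (count (fun y => y <= nth 0 t k./2.-1) s <= count (fun y => y <= z) s)%N
    by apply: sub_count => y /=; lia.
  lia.
Qed.

Definition Fs (s : seq nat) (c : nat) := \sum_(y <- s) ((c - y) + (y - c)).

Lemma Fs_step (s : seq nat) c :
  (Fs s c.+1 + count (fun y => c < y) s = Fs s c + count (fun y => y <= c) s)%N.
Proof.
rewrite /Fs; elim: s => [|y s IH]; first by rewrite !big_nil.
rewrite !big_cons /=. case: (leqP y c) => h /=; lia.
Qed.

Lemma Fs_opt (s : seq nat) y : (Fs s (zmed s) <= Fs s y)%N.
Proof.
have [c1 c2] := andP (zmed_char s). set z := zmed s in c1 c2 *.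
have tot : forall c, (count (fun y => y <= c) s + count (fun y => c < y) s = size s)%N.
  move=> c; rewrite -(count_predC (fun y => y <= c)).
  congr (_ + _)%N; apply: eq_count => x /=; lia.
have dec : forall c, (c < z)%N -> (Fs s c.+1 <= Fs s c)%N.
  move=> c hc. have := Fs_step s c. have := tot c.
  have : (count (fun y => y <= c) s <= count (fun y => y < z) s)%N
    by apply: sub_count => x /=; lia.
  lia.
have inc : forall c, (z <= c)%N -> (Fs s c <= Fs s c.+1)%N.
  move=> c hc. have := Fs_step s c. have := tot c.
  have : (count (fun y => y <= z) s <= count (fun y => y <= c) s)%N
    by apply: sub_count => x /=; lia.
  lia.
case: (leqP y z) => hy.
- have key : forall n, (y + n <= z)%N -> (Fs s (y + n) <= Fs s y)%N.
    elim=> [|n IH] hn; first by rewrite addn0.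
    rewrite addnS. apply: leq_trans (dec _ _) (IH _); lia.
  have := key (z - y)%N. have -> : (y + (z - y) = z)%N by lia. apply; lia.
- have key : forall n, (Fs s z <= Fs s (z + n))%N.
    elim=> [|n IH]; first by rewrite addn0.
    rewrite addnS. apply: leq_trans IH (inc _ _); lia.
  have := key (y - z)%N. have -> : (z + (y - z) = y)%N by lia. by [].
Qed.
Set Implicit Arguments. Unset Strict Implicit.

Section TreeFacts.
Variables (T : finType) (rt : T) (par : T -> option T).
Hypothesis hroot : par rt = None.
Hypothesis hanc : forall v, anc par rt v.

Local Notation ip := (iterp par).

Lemma iterpS n y : ip n.+1 y = obind (ip n) (par y).
Proof.
elim: n y => [|n IH] y; first by rewrite /=; case: (par y).
change (obind par (ip n.+1 y) = obind (ip n.+1) (par y)).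
rewrite IH; by case: (par y).
Qed.

Lemma iterp_add m n y : ip (m + n) y = obind (ip m) (ip n y).
Proof.
elim: m => [|m IH]; first by rewrite /=; case: (ip n y).
change (obind par (ip (m + n) y) = obind (ip m.+1) (ip n y)).
rewrite IH; by case: (ip n y).
Qed.

Lemma iterp_rt k : ip k.+1 rt = None.
Proof. by rewrite iterpS hroot. Qed.

Definition ht v := find (fun n => ip n v == Some rt) (iota 0 #|T|).

Lemma ht_spec v : ip (ht v) v = Some rt /\ (ht v < #|T|)%N.
Proof.
have hh : has (fun n => ip n v == Some rt) (iota 0 #|T|).
  have /existsP [n hn] := hanc v.
  apply/hasP; exists (nat_of_ord n) => //; rewrite mem_iota /=; exact: ltn_ord.
have := nth_find 0 hh. have := hh; rewrite has_find size_iota => hlt.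
rewrite nth_iota // add0n => /eqP; split => //.
Qed.

Lemma iterp_rt_none a b v : (a < b)%N -> ip a v = Some rt -> ip b v = None.
Proof.
move=> hab ha. have -> : b = ((b - a.+1).+1 + a)%N by lia.
rewrite iterp_add ha; exact: iterp_rt.
Qed.

Lemma ht_uniq n v : ip n v = Some rt -> n = ht v.
Proof.
move=> hn. have [h1 _] := ht_spec v.
case: (ltngtP n (ht v)) => // hlt.
- by have := iterp_rt_none hlt hn; rewrite h1.
- by have := iterp_rt_none hlt h1; rewrite hn.
Qed.

Lemma steps_ht k w u : ip k w = Some u -> ht w = (ht u + k)%N.
Proof.
move=> hk. have [h1 _] := ht_spec u. symmetry; apply: ht_uniq.
by rewrite iterp_add hk.
Qed.

Lemma par_ht v p : par v = Some p -> ht v = (ht p).+1.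
Proof. move=> h. by rewrite (@steps_ht 1 v p) ?addn1. Qed.

Lemma adj_ht u x : adj par u x -> ht x = (ht u).+1 \/ ht u = (ht x).+1.
Proof.
by case/orP => /eqP h; [right; apply: par_ht | left; apply: par_ht].
Qed.

Lemma reach_ht n u w : reach par n u w -> (ht u <= ht w + n)%N /\ (ht w <= ht u + n)%N.
Proof.
elim: n u => [|n IH] u /=; first by move/eqP ->; lia.
case/existsP => x /andP [ha hr]. have := IH _ hr. have := adj_ht ha. lia.
Qed.

Lemma reach_down k u w : ip k w = Some u -> reach par k u w.
Proof.
elim: k u => [|k IH] u /=; first by case=> ->.
case e: (ip k w) => [x|] //= hx. apply/existsP; exists x.
by rewrite /adj hx eqxx orbT /= IH.
Qed.

Lemma reach_up k u w : ip k w = Some u -> reach par k w u.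
Proof.
elim: k w => [|k IH] w /=; first by case=> ->.
rewrite -/(ip k.+1 w) iterpS.
case e: (par w) => [p|] //= hp. apply/existsP; exists p.
by rewrite /adj e eqxx /= IH.
Qed.

Lemma find_iota (p : pred nat) k n : (k < n)%N -> p k -> (forall j, (j < k)%N -> ~~ p j) ->
  find p (iota 0 n) = k.
Proof.
move=> hkn pk hj. have -> : n = (k + (n - k))%N by lia.
rewrite iotaD find_cat.
have -> : has p (iota 0 k) = false.
  apply/negbTE/hasPn => j; rewrite mem_iota => /andP [_ hjk]; apply: hj; lia.
rewrite size_iota add0n. have -> : (n - k = (n - k).-1.+1)%N by lia.
by rewrite /= pk addn0.
Qed.

Lemma dist_steps k w u : ip k w = Some u -> dist par u w = k /\ dist par w u = k.
Proof.
move=> hk. have e := steps_ht hk. have [_ hw] := ht_spec w.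
split; apply: find_iota; try lia.
- exact: reach_down.
- move=> j hj; apply/negP => /reach_ht; lia.
- exact: reach_up.
- move=> j hj; apply/negP => /reach_ht; lia.
Qed.

Definition st u w := exists k, ip k w = Some u.

Lemma anc_st x y : anc par x y <-> st x y.
Proof.
split; first by case/existsP => n /eqP h; exists n.
case=> k hk. have e := steps_ht hk. have [_ hw] := ht_spec y.
have hk' : (k < #|T|)%N by lia.
by apply/existsP; exists (Ordinal hk'); apply/eqP.
Qed.

Lemma st_refl u : st u u. Proof. by exists 0%N. Qed.

Lemma st_trans u v w : st u v -> st v w -> st u w.
Proof. case=> k1 h1 [k2 h2]; exists (k1 + k2)%N; by rewrite iterp_add h2. Qed.

Lemma st_ht u w : st u w -> (ht u <= ht w)%N.
Proof. case=> k hk; rewrite (steps_ht hk); lia. Qed.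

Lemma st_cmp u w x : st u x -> st w x -> (ht u <= ht w)%N -> ip (ht w - ht u) w = Some u.
Proof.
case=> a ha [b hb] hle. have ea := steps_ht ha. have eb := steps_ht hb.
have -> : (ht w - ht u = a - b)%N by lia.
have : ip ((a - b) + b) x = Some u by rewrite subnK //; lia.
by rewrite iterp_add hb.
Qed.

Lemma st_antisym u w : st u w -> ht u = ht w -> u = w.
Proof. case=> k hk e. have := steps_ht hk. rewrite e => h. have k0 : k = 0%N by lia.
by move: hk; rewrite k0 => -[]. Qed.

Lemma dist_anc a b M : st a M -> st b M -> dist par a b = ((ht a - ht b) + (ht b - ht a))%N.
Proof.
move=> ha hb. case: (leqP (ht a) (ht b)) => h.
- have [d1 _] := dist_steps (st_cmp ha hb h). rewrite d1; lia.
- have [_ d2] := dist_steps (st_cmp hb ha (ltnW h)). rewrite d2; lia.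
Qed.

Lemma st_rt v : st rt v. Proof. by exists (ht v); case: (ht_spec v). Qed.

Lemma depth_ht v : depth rt par v = ht v.
Proof. rewrite /depth. by case: (dist_steps (proj1 (ht_spec v))). Qed.

Lemma steps_exist k y : (k <= ht y)%N -> exists u, ip k y = Some u.
Proof.
move=> hk. have [h1 _] := ht_spec y. move: h1.
have -> : ht y = ((ht y - k) + k)%N by lia.
rewrite iterp_add. case: (ip k y) => [u|] //= _; by exists u.
Qed.

Lemma lca_spec (L : {set T}) x0 : x0 \in L ->
  (forall x, x \in L -> st (lca rt par L) x) /\
  (forall w, (forall x, x \in L -> st w x) -> st w (lca rt par L)).
Proof.
move=> hx0. rewrite /lca.
have P0 : [forall x in L, anc par rt x] by apply/forall_inP => x _; apply: hanc.
case: (@arg_maxnP T rt (fun w => [forall x in L, anc par w x]) (depth rt par) P0) => c /forall_inP Pc Hmax.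
split; first by move=> x /Pc /anc_st.
move=> w Hw.
have Pw : [forall x in L, anc par w x] by apply/forall_inP => x /Hw /anc_st.
have := Hmax _ Pw. rewrite !depth_ht => hle.
exists (ht c - ht w)%N. apply: (st_cmp (x := x0)) => //; [exact: Hw | apply/anc_st; exact: Pc].
Qed.

Lemma leaf_below v : exists x, is_leaf par x /\ st v x.
Proof.
move: {2}(#|T| - ht v)%N (leqnn (#|T| - ht v)) => n.
elim: n v => [|n IH] v hn.
- have [_ h] := ht_spec v. lia.
- case hl: (is_leaf par v); first by exists v; split => //; exact: st_refl.
  move/negbT: hl; rewrite /is_leaf => /set0Pn [c]; rewrite inE => /eqP hc.
  have e := par_ht hc. have [_ h] := ht_spec c.
  have [x [hx hcx]] := IH c ltac:(lia).
  exists x; split => //. apply: st_trans hcx. by exists 1%N.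
Qed.

End TreeFacts.

Theorem mainTheorem4
  (TP : finType) (rP : TP) (parP : TP -> option TP)
  (TH : finType) (rH : TH) (parH : TH -> option TH)
  (phi : TP -> TH) :
  is_phylo rP parP -> is_phylo rH parH ->
  (forall x, is_leaf parP x -> is_leaf parH (phi x)) ->
  forall (l : nat) (psis : 'I_l -> TP -> TH),
  0 < l ->
  (forall i, is_recon parP parH phi (psis i)) ->
  is_recon parP parH phi (psi_med parP rH parH phi psis) /\
  forall psi : TP -> TH, is_recon parP parH phi psi ->
    \sum_(i < l) dpath parH (psi_med parP rH parH phi psis) (psis i)
    <= \sum_(i < l) dpath parH psi (psis i).
Proof.
move=> [hrP _ haP _ _] [hrH _ haH _ _] _ l psis l0 Hrec.
have recon_st : forall psi, is_recon parP parH phi psi -> forall k x v,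
    iterp parP k x = Some v -> st parH (psi v) (psi x).
  move=> psi [_ hp]. elim=> [|k IH] x v /=; first by case=> ->; exact: st_refl.
  case e: (iterp parP k x) => [y|] //= hy.
  apply: st_trans (IH _ _ e). apply/(anc_st hrH haH). exact: hp.
have recon_m : forall psi, is_recon parP parH phi psi -> forall v,
    st parH (psi v) (mlca parP rH parH phi v).
  move=> psi hpsi v. rewrite /mlca.
  have [x [hx hvx]] := leaf_below hrP haP v.
  have hx0 : phi x \in phi @: leaves_below parP v.
    apply: imset_f; rewrite inE hx /=; apply/(anc_st hrP haP); exact: hvx.
  have [_ Hmax] := lca_spec hrH haH hx0. apply: Hmax => y /imsetP [x' hx' ->].
  move: hx'; rewrite inE => /andP [hl' /(anc_st hrP haP) [k hk]].
  rewrite -(proj1 hpsi x' hl'). exact: recon_st hk.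
have Y_spec : forall psi, is_recon parP parH phi psi -> forall v,
    (ht rH parH (psi v) + dist parH (mlca parP rH parH phi v) (psi v)
       = ht rH parH (mlca parP rH parH phi v))%N.
  move=> psi hpsi v. have [k hk] := recon_m _ hpsi v.
  have [_ ->] := dist_steps hrH haH hk. by rewrite (steps_ht hrH haH hk).
have med_spec : forall v,
    st parH (psi_med parP rH parH phi psis v) (mlca parP rH parH phi v) /\
    (ht rH parH (psi_med parP rH parH phi psis v)
      + zmed [seq dist parH (mlca parP rH parH phi v) (psis i v) | i <- enum 'I_l]
      = ht rH parH (mlca parP rH parH phi v))%N.
  move=> v.
  set z := zmed _.
  have zle : (z <= ht rH parH (mlca parP rH parH phi v))%N.
    apply: zmed_le => x /mapP [i _ ->]. have := Y_spec _ (Hrec i) v. lia.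
  have [w0 hw0] := steps_exist haH zle.
  rewrite /psi_med -/z. case: pickP => [w /andP [/(anc_st hrH haH) [k hk] /eqP hd] | hn] /=.
  - have [_ d] := dist_steps hrH haH hk. rewrite d in hd. split; first by exists k.
    rewrite (steps_ht hrH haH hk); lia.
  - have ha : anc parH w0 (mlca parP rH parH phi v) by apply/(anc_st hrH haH); exists z.
    have hd : dist parH (mlca parP rH parH phi v) w0 = z := proj2 (dist_steps hrH haH hw0).
    by have := hn w0; rewrite ha hd eqxx.
split.
- split.
  + move=> x hx.
    have hxin : phi x \in phi @: leaves_below parP x.
      apply: imset_f; rewrite inE hx /=; apply/(anc_st hrP haP); exact: st_refl.
    have [hM _] := lca_spec hrH haH hxin. have hM1 := hM _ hxin. rewrite -/(mlca parP rH parH phi x) in hM1.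
    pose i0 := Ordinal l0.
    have hM2 := recon_m _ (Hrec i0) x. rewrite (proj1 (Hrec i0) x hx) in hM2.
    have eM : mlca parP rH parH phi x = phi x.
      apply: (st_antisym hrH haH hM1). have := st_ht hrH haH hM1. have := st_ht hrH haH hM2. lia.
    have z0 : (zmed [seq dist parH (mlca parP rH parH phi x) (psis i x) | i <- enum 'I_l] <= 0)%N.
      apply: zmed_le => y /mapP [i _ ->]. rewrite eM (proj1 (Hrec i) x hx).
      by rewrite (proj1 (dist_steps hrH haH (k := 0) (erefl (Some (phi x))))).
    have [h1 h2] := med_spec x. rewrite -eM. apply: (st_antisym hrH haH h1). lia.
  + move=> v v' hpar. apply/(anc_st hrH haH).
    have hMM : st parH (mlca parP rH parH phi v) (mlca parP rH parH phi v').
      have [x [hx hvx]] := leaf_below hrP haP v'.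
      have hx0 : phi x \in phi @: leaves_below parP v'.
        apply: imset_f; rewrite inE hx /=; apply/(anc_st hrP haP); exact: hvx.
      have [_ Hmax] := lca_spec hrH haH hx0. apply: Hmax => y /imsetP [x' hx' ->].
      move: hx'; rewrite inE => /andP [hl' /(anc_st hrP haP) hk].
      have hx1 : phi x' \in phi @: leaves_below parP v.
        apply: imset_f; rewrite inE hl' /=; apply/(anc_st hrP haP).
        apply: st_trans hk. by exists 1%N.
      have [hM _] := lca_spec hrH haH hx1. exact: hM.
    have hle := st_ht hrH haH hMM.
    have mono : forall i, (dist parH (mlca parP rH parH phi v') (psis i v') <=
        dist parH (mlca parP rH parH phi v) (psis i v) +
        (ht rH parH (mlca parP rH parH phi v') - ht rH parH (mlca parP rH parH phi v)))%N.
      move=> i. have h1 := Y_spec _ (Hrec i) v. have h2 := Y_spec _ (Hrec i) v'.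
      have h3 : (ht rH parH (psis i v) <= ht rH parH (psis i v'))%N.
        apply: (st_ht hrH haH). apply/(anc_st hrH haH). exact: (proj2 (Hrec i)).
      lia.
    have zm : (zmed [seq dist parH (mlca parP rH parH phi v') (psis i v') | i <- enum 'I_l] <=
       zmed [seq dist parH (mlca parP rH parH phi v) (psis i v) | i <- enum 'I_l] +
        (ht rH parH (mlca parP rH parH phi v') - ht rH parH (mlca parP rH parH phi v)))%N
      := @zmed_mono _ (enum 'I_l) (fun i => dist parH (mlca parP rH parH phi v) (psis i v))
       (fun i => dist parH (mlca parP rH parH phi v') (psis i v')) _ mono.
    have [a1 a2] := med_spec v. have [b1 b2] := med_spec v'.
    have hst := st_trans a1 hMM.
    exists (ht rH parH (psi_med parP rH parH phi psis v') - ht rH parH (psi_med parP rH parH phi psis v))%N.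
    apply: (st_cmp hrH haH hst b1). lia.
- move=> psi hpsi. rewrite /dpath. rewrite exchange_big [X in (_ <= X)%N]exchange_big /=.
  apply: leq_sum => v _.
  set z := zmed [seq dist parH (mlca parP rH parH phi v) (psis i v) | i <- enum 'I_l].
  have [a1 a2] := med_spec v. rewrite -/z in a2.
  have E1 : forall i, dist parH (psi_med parP rH parH phi psis v) (psis i v) =
      ((z - dist parH (mlca parP rH parH phi v) (psis i v)) + (dist parH (mlca parP rH parH phi v) (psis i v) - z))%N.
    move=> i. rewrite (dist_anc hrH haH a1 (recon_m _ (Hrec i) v)).
    have := Y_spec _ (Hrec i) v. lia.
  have E2 : forall i, dist parH (psi v) (psis i v) =
      ((dist parH (mlca parP rH parH phi v) (psi v) - dist parH (mlca parP rH parH phi v) (psis i v)) + (dist parH (mlca parP rH parH phi v) (psis i v) - dist parH (mlca parP rH parH phi v) (psi v)))%N.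
    move=> i. rewrite (dist_anc hrH haH (recon_m _ hpsi v) (recon_m _ (Hrec i) v)).
    have := Y_spec _ (Hrec i) v. have := Y_spec _ hpsi v. lia.
  rewrite (eq_bigr _ (fun i _ => E1 i)) (eq_bigr _ (fun i _ => E2 i)).
  have conv : forall c, (\sum_(i < l) ((c - dist parH (mlca parP rH parH phi v) (psis i v)) + (dist parH (mlca parP rH parH phi v) (psis i v) - c)))%N
      = Fs [seq dist parH (mlca parP rH parH phi v) (psis i v) | i <- enum 'I_l] c.
    by move=> c; rewrite /Fs big_map big_enum.
  rewrite !conv. exact: Fs_opt.
Qed.
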